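(* Let $\phi:\Omega^{even}(\mathbb{C}^n)^{\otimes 2}\to\Omega^{even}(\mathbb{C}^n)$ be the linear map $\phi(\omega_1\otimes\omega_2)=d\omega_1\wedge d\omega_2$. For any $i,j\in[1,n]$ and any $\omega_1,\omega_2\in\Omega^{even}(\mathbb{C}^n)$, the element $(x_{i1}-x_{i2})(x_{j1}-x_{j2})\,\omega_1\otimes\omega_2$ lies in the kernel of $\phi$. Consequently, for every $m\ge 2$, the submodule $(x_{i1}-x_{i2})(x_{j1}-x_{j2})\,\Omega^{mn}$ lies in the kernel of $\psi:\Omega^{mn}\to B_m(A_n)$.
   Context: $\Omega^{even}(\mathbb{C}^n)$ is the space of polynomial differential forms of even degree on $\mathbb{C}^n$ with coordinates $y_1,\dots,y_n$. For $m\ge 1$, $\Omega^{mn}:=\Omega^{even}(\mathbb{C}^n)^{\otimes m}$, which is a module over $\mathcal{O}_{mn}=\mathbb{C}[x_{ij}]_{1\le i\le n,1\le j\le m}$, where $x_{ij}$ acts by multiplication by the coordinate $y_i$ on the $j$-th tensor factor. $A_n$ is the free associative algebra on $n$ generators over $\mathbb{C}$, with lower central series $L_1=A_n$, $L_i=[A_n,L_{i-1}]$, $B_i(A_n)=L_i/L_{i+1}$; $\bar B_1(A_n)$ is the quotient of $B_1(A_n)=A_n/[A_n,A_n]$ by the image of $A_n[[A_n,A_n],A_n]A_n$, and the Lie bracket of $A_n$ induces brackets $\bar B_1\otimes \bar B_1\to B_2$, $B_i\otimes\bar B_1\to B_{i+1}$. By results of Feigin–Shoikhet there is a surjective linear map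 $\xi:\Omega^{even}(\mathbb{C}^n)\to\bar B_1(A_n)$ with kernel the exact even forms, and an isomorphism $\eta$ from the exact even forms of positive degree onto $B_2(A_n)$, such that $[\xi(\omega_1),\xi(\omega_2)]=\eta(d\omega_1\wedge d\omega_2)$. The map $\psi:\Omega^{mn}\to B_m(A_n)$ (for $m\ge2$) is defined by $\psi(\omega_1\otimes\cdots\otimes\omega_m)=[[\cdots[[b_1,b_2],b_3],\ldots],b_m]$ with $b_i=\xi(\omega_i)$. *)

(* Defs.v *)
From HB Require Import structures.
From mathcomp Require Import all_boot all_order all_algebra.
From mathcomp Require Import mpoly.
From mathcomp Require Import complex.
From mathcomp Require Import reals.
Set Implicit Arguments. Unset Strict Implicit. Unset Printing Implicit Defensive.
Import Order.TTheory GRing.Theory Num.Theory.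
Local Open Scope ring_scope.

(* Polynomial differential forms on C^n, coordinates y_1..y_n:
   a form is  sum_S f_S dy_S  (S a subset of 'I_n, dy_S the wedge of the dy_s
   in increasing order), represented by the finite function S |-> f_S. *)
Definition dform (R : realType) (n : nat) := {ffun {set 'I_n} -> {mpoly R[i][n]}}.

Section Forms.
Variables (R : realType) (n : nat).
Local Notation C := (R[i]).
Local Notation form := (dform R n).

Definition form_add (a b : form) : form := [ffun U => a U + b U].
Definition form_opp (a : form) : form := [ffun U => - a U].
Definition form_scale (c : C) (a : form) : form := [ffun U => c *: a U].
Definition form0 : form := [ffun _ => 0].

Definition mulY (i : 'I_n) (a : form) : form := [ffun U => 'X_i * a U].

(* sign of dy_S /\ dy_T = sgn S T dy_(S u T) for disjoint S, T *)
Definition wsgn (S T : {set 'I_n}) : C :=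
  (-1) ^+ #|[set p : 'I_n * 'I_n | (p.1 \in S) && (p.2 \in T) && (p.2 < p.1)%N]|.

Definition wedge (a b : form) : form :=
  [ffun U : {set 'I_n} => \sum_(S : {set 'I_n}) \sum_(T : {set 'I_n} |
        (S :&: T == set0) && (S :|: T == U)) wsgn S T *: (a S * b T)].

(* de Rham differential: d(f dy_S) = sum_i (df/dy_i) dy_i /\ dy_S *)
Definition dR (a : form) : form :=
  [ffun U : {set 'I_n} => \sum_(i : 'I_n | i \in U)
      (-1) ^+ #|[set k : 'I_n | (k \in U) && (k < i)%N]| *: mderiv i (a (U :\ i))].

Definition even_form (a : form) : Prop := forall U : {set 'I_n}, odd #|U| -> a U = 0.

(* exact even forms (these automatically have positive degree) *)
Definition exact_even (a : form) : Prop := even_form a /\ exists b, a = dR b.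

Definition phi (a b : form) : form := wedge (dR a) (dR b).

End Forms.

Section LCS.
Variables (K : fieldType) (A : algType K).

Definition comm (a b : A) : A := a * b - b * a.

Inductive inspan (P : A -> Prop) : A -> Prop :=
| span_gen x : P x -> inspan P x
| span_0 : inspan P 0
| span_add x y : inspan P x -> inspan P y -> inspan P (x + y)
| span_scale c x : inspan P x -> inspan P (c *: x).

(* L k : L_1 = A, L_(k+1) = span [A, L_k]  (L 0 is also A, by convention) *)
Fixpoint L (k : nat) : A -> Prop :=
  match k with
  | 0 | 1 => fun _ => True
  | k'.+1 => inspan (fun x => exists a l, L k' l /\ x = comm a l)
  end.
End LCS.

(* lift of psi(w1 (x) ... (x) wm) = [[...[[b1,b2],b3],...],bm] given the first
   bracket x = [b1,b2] and the remaining factors ws = [w3; ...; wm] *)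
Definition iterb (K : fieldType) (A : algType K) (T : Type) (xi : T -> A)
  (x : A) (ws : seq T) : A := foldl (fun acc w => comm acc (xi w)) x ws.

(* Main.v *)
Require Import Defs.
From HB Require Import structures.
From mathcomp Require Import all_boot all_order all_algebra.
From mathcomp Require Import mpoly complex reals.
From mathcomp Require Import ring zify.
Import Order.TTheory GRing.Theory Num.Theory.
Local Open Scope ring_scope.


Section Aux.
Variables (R : realType) (n : nat).
Local Notation C := (R[i]).
Local Notation P := ({mpoly R[i][n]}).
Local Notation form := (dform R n).
Implicit Types (A B S T U V X : {set 'I_n}) (i j p q : 'I_n).

Definition cnt i X : nat := (\sum_(t in X) (t < i))%N.
Definition cntg i X : nat := (\sum_(t in X) (i < t))%N.
Definition NN S T : nat := (\sum_(s in S) \sum_(t in T) (t < s))%N.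
Definition sgn (k : nat) : C := (-1) ^+ k.

Lemma sumUn (F : 'I_n -> nat) A B : [disjoint A & B] ->
  (\sum_(i in A :|: B) F i = \sum_(i in A) F i + \sum_(i in B) F i)%N.
Proof.
move=> dAB; rewrite (big_setID A) /= setUK setDUl setDv set0U.
by rewrite (setDidPl _); last by rewrite disjoint_sym.
Qed.

Lemma card_cnt i X : #|[set k | (k \in X) && (k < i)%N]| = cnt i X.
Proof.
rewrite -sum1_card /cnt big_mkcond [RHS]big_mkcond /=; apply: eq_bigr => k _.
by rewrite inE; case: (k \in X); case: (k < i)%N.
Qed.

Lemma card_NN S T :
  #|[set pr : 'I_n * 'I_n | (pr.1 \in S) && (pr.2 \in T) && (pr.2 < pr.1)%N]|
  = NN S T.
Proof.
rewrite /NN big_mkcond /=.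
rewrite (eq_bigr (fun s => \sum_(t : 'I_n) (if (s \in S) && (t \in T) && (t < s)%N then 1 else 0))%N); last first.
  move=> s _; case: (s \in S); last by rewrite big1.
  by rewrite big_mkcond; apply: eq_bigr => t _ /=; case: (t \in T); case: (t < s)%N.
rewrite pair_bigA -sum1_card big_mkcond /=; apply: eq_bigr => -[s t] _.
by rewrite inE.
Qed.

Lemma wsgnE S T : wsgn R S T = sgn (NN S T).
Proof. by rewrite /wsgn card_NN. Qed.

Lemma NUl A B X : [disjoint A & B] -> NN (A :|: B) X = (NN A X + NN B X)%N.
Proof. by move=> d; rewrite /NN sumUn. Qed.

Lemma NUr A B X : [disjoint A & B] -> NN X (A :|: B) = (NN X A + NN X B)%N.
Proof. by move=> d; rewrite /NN -big_split; apply: eq_bigr => s _; rewrite sumUn. Qed.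

Lemma NN1l p X : NN [set p] X = cnt p X.
Proof. by rewrite /NN big_set1. Qed.

Lemma NN1r q X : NN X [set q] = cntg q X.
Proof. by rewrite /NN; apply: eq_bigr => s _; rewrite big_set1. Qed.

Lemma cntU i A B : [disjoint A & B] -> cnt i (A :|: B) = (cnt i A + cnt i B)%N.
Proof. by move=> d; rewrite /cnt sumUn. Qed.

Lemma cnt1 i j : cnt i [set j] = (j < i)%N.
Proof. by rewrite /cnt big_set1. Qed.

Lemma cnt_cntg i X : i \notin X -> (cnt i X + cntg i X)%N = #|X|.
Proof.
move=> iX; rewrite /cnt /cntg -big_split -sum1_card; apply: eq_bigr => t tX.
have ti : t != i by apply: contraNneq iX => <-.
by move: ti; rewrite -(inj_eq val_inj) /=; case: ltngtP.
Qed.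

Lemma sgnD a b : sgn (a + b) = sgn a * sgn b.
Proof. by rewrite /sgn exprD. Qed.

Lemma sgn2 k : sgn (k * 2) = 1.
Proof. by rewrite /sgn mulnC exprM sqrrN !expr1n. Qed.

Lemma sgn_eq a b k : b = (a + k * 2)%N -> sgn b = sgn a.
Proof. by move=> ->; rewrite sgnD sgn2 mulr1. Qed.

Lemma sgn_opp a b k : (a + b)%N = (k * 2).+1 -> sgn a = - sgn b.
Proof.
move=> h; have : sgn (a + b) = -1 by rewrite h -addn1 sgnD sgn2 mul1r /sgn expr1.
rewrite sgnD => e; have sb : sgn b * sgn b = 1 by rewrite -sgnD addnn -mul2n mulnC sgn2.
by rewrite -[sgn a]mulr1 -sb mulrA e mulN1r.
Qed.


Lemma wedge_cond S T U : S \subset U ->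
  ((S :&: T == set0) && (S :|: T == U)) = (T == U :\: S).
Proof.
move=> SU; apply/idP/eqP.
  move=> /andP[/eqP I /eqP <-]; rewrite setDUl setDv set0U.
  by apply/esym/setDidPl; rewrite -setI_eq0 setIC I.
move=> ->; apply/andP; split; apply/eqP/setP => x; rewrite !inE.
  by case: (x \in S).
by case xS: (x \in S) => //=; rewrite (subsetP SU).
Qed.

Lemma wedgeE (a b : form) U : wedge a b U =
  \sum_(S : {set 'I_n} | S \subset U) wsgn R S (U :\: S) *: (a S * b (U :\: S)).
Proof.
rewrite ffunE (bigID (fun S : {set 'I_n} => S \subset U)) /= [X in _ + X]big1 ?addr0.
  apply: eq_bigr => S SU; rewrite (big_pred1 (U :\: S)) // => T.
  by rewrite wedge_cond.
move=> S nSU; rewrite big1 // => T /andP[_ /eqP E].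
by move: nSU; rewrite -E subsetUl.
Qed.

Lemma dRE (a : form) U : dR a U =
  \sum_(i in U) sgn (cnt i U) *: mderiv i (a (U :\ i)).
Proof. by rewrite ffunE; apply: eq_bigr => i _; rewrite card_cnt. Qed.

Lemma dR_add (a b : form) : dR (form_add a b) = form_add (dR a) (dR b).
Proof.
apply/ffunP => U; rewrite !ffunE -big_split; apply: eq_bigr => i _.
by rewrite ffunE mderivD scalerDr.
Qed.

Lemma dR_opp (a : form) : dR (form_opp a) = form_opp (dR a).
Proof.
apply/ffunP => U; rewrite !ffunE -sumrN; apply: eq_bigr => i _.
by rewrite ffunE mderivN scalerN.
Qed.

Lemma dR_scale c (a : form) : dR (form_scale c a) = form_scale c (dR a).
Proof.
apply/ffunP => U; rewrite !ffunE scaler_sumr; apply: eq_bigr => i _.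
by rewrite ffunE mderivZ !scalerA mulrC.
Qed.

Lemma dR0 : dR (form0 R n) = form0 R n.
Proof.
apply/ffunP => U; rewrite !ffunE big1 // => i _.
by rewrite ffunE mderiv0 scaler0.
Qed.

Lemma mX i j : mderiv j ('X_i : P) = (i == j)%:R.
Proof. rewrite mderivX mnm1E; case: eqP => [->|_]; last by rewrite scale0r.
have -> : (U_(j) - U_(j))%MM = 0%MM by apply/mnmP=> k; rewrite mnmBE subnn mnm0E.
by rewrite mpolyX0 scale1r.
Qed.


Lemma disjD A B : [disjoint A & B :\: A].
Proof. by rewrite -setI_eq0; apply/eqP/setP => x; rewrite !inE; case: (x \in A). Qed.

Lemma setUD A B : A \subset B -> A :|: (B :\: A) = B.
Proof.
move=> AB; apply/setP => x; rewrite !inE.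
by case xA: (x \in A) => //=; rewrite (subsetP AB).
Qed.

Lemma setU1D1 i S : ((i |: S) :\ i == S) = (i \notin S).
Proof.
apply/eqP/idP => [<-|iS]; first by rewrite !inE eqxx.
by rewrite setU1K.
Qed.

Lemma cnt_self i : cnt i [set i] = 0%N.
Proof. by rewrite cnt1 ltnn. Qed.

Lemma mderiv_sum (I : Type) (r : seq I) (Pr : pred I) (F : I -> P) i :
  mderiv i (\sum_(j <- r | Pr j) F j) = \sum_(j <- r | Pr j) mderiv i (F j).
Proof. exact: (raddf_sum (mderiv i)). Qed.

Lemma leib1 (a c : form) U :
  \sum_(i in U) \sum_(S : {set 'I_n} | S \subset U :\ i)
     (sgn (cnt i U) * wsgn R S ((U :\ i) :\: S)) *: (mderiv i (a S) * c ((U :\ i) :\: S))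
  = wedge (dR a) c U.
Proof.
rewrite wedgeE.
under [RHS]eq_bigr => S _ do rewrite dRE mulr_suml scaler_sumr.
rewrite (exchange_big_dep (fun i => i \in U)) /=; last first.
  by move=> S i SU iS; rewrite (subsetP SU).
apply: eq_bigr => i iU.
rewrite [RHS](reindex_onto (fun S => i |: S) (fun S => S :\ i)) /=; last first.
  by move=> S /andP[_ iS]; rewrite setD1K.
apply: eq_big => [S|S].
  by rewrite subUset sub1set iU setU11 /= setU1D1 subsetD1 andbT.
move=> /subsetD1P[SU iS].
rewrite setU1K // setDDl -scalerAl scalerA; congr (_ *: _).
set Cs := U :\: ([set i] :|: S).
have dS : [disjoint [set i] & S] by rewrite disjoints1.
have dC : [disjoint [set i] :|: S & Cs] by apply: disjD.
have EU : U = ([set i] :|: S) :|: Cs.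
  by rewrite setUD // subUset sub1set iU.
rewrite !wsgnE {1}EU !cntU // NUl // NN1l cnt_self -!sgnD; congr sgn.
lia.
Qed.

Lemma leib2 (a c : form) U : dR c = form0 R n ->
  \sum_(i in U) \sum_(S : {set 'I_n} | S \subset U :\ i)
     (sgn (cnt i U) * wsgn R S ((U :\ i) :\: S)) *: (a S * mderiv i (c ((U :\ i) :\: S)))
  = 0.
Proof.
move=> dc.
rewrite (exchange_big_dep (fun S : {set 'I_n} => S \subset U)) /=; last first.
  by move=> i S _; rewrite subsetD1 => /andP[].
apply: big1 => S SU.
have -> : \sum_(i | (i \in U) && (S \subset U :\ i))
     (sgn (cnt i U) * wsgn R S ((U :\ i) :\: S)) *: (a S * mderiv i (c ((U :\ i) :\: S)))
   = (sgn #|S| * wsgn R S (U :\: S)) *: (a S * dR c (U :\: S)).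
  rewrite dRE mulr_sumr scaler_sumr.
  apply: eq_big => [i|i]; first by rewrite subsetD1 SU /= in_setD andbC.
  move=> /andP[iU /subsetD1P[_ iS]].
  rewrite -scalerAr scalerA.
  have -> : (U :\: S) :\ i = (U :\ i) :\: S by rewrite !setDDl setUC.
  congr (_ *: _); rewrite setDDl.
  set Cs := U :\: ([set i] :|: S).
  have dS : [disjoint S & [set i] :|: Cs].
    rewrite -setI_eq0; apply/eqP/setP => x; rewrite !inE.
    case xS: (x \in S) => //=; case: (x =P i) => [xi|_]; first by rewrite -xi xS in iS.
    by [].
  have d1 : [disjoint [set i] & Cs] by rewrite disjoints1 !inE eqxx.
  have E1 : U :\: S = [set i] :|: Cs.
    apply/setP => x; rewrite !inE; case: (x =P i) => [->|]; first by rewrite iU (negbTE iS).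
    by case: (x \in S).
  have EU : U = S :|: ([set i] :|: Cs) by rewrite -E1 setUD.
  rewrite E1 {1}EU !wsgnE !cntU // NUr // NN1r cnt_self -(@cnt_cntg i S iS) -!sgnD.
  by symmetry; apply: (@sgn_eq _ _ (cntg i S)); lia.
by rewrite dc ffunE mulr0 scaler0.
Qed.


Lemma leib (a c : form) : dR c = form0 R n -> dR (wedge a c) = wedge (dR a) c.
Proof.
move=> dc; apply/ffunP => U; rewrite dRE.
rewrite (eq_bigr (fun i =>
   \sum_(S : {set 'I_n} | S \subset U :\ i)
     (sgn (cnt i U) * wsgn R S ((U :\ i) :\: S)) *: (mderiv i (a S) * c ((U :\ i) :\: S))
 + \sum_(S : {set 'I_n} | S \subset U :\ i)
     (sgn (cnt i U) * wsgn R S ((U :\ i) :\: S)) *: (a S * mderiv i (c ((U :\ i) :\: S))))).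
  by rewrite big_split /= leib2 // addr0 leib1.
move=> i iU.
rewrite wedgeE mderiv_sum scaler_sumr -big_split; apply: eq_bigr => S _.
by rewrite mderivZ mderivM scalerA scalerDr.
Qed.

Lemma selfopp (x : P) : x = - x -> x = 0.
Proof.
move=> h; have h2 : (2%:R : C) *: x = 0 by rewrite scaler_nat mulr2n {2}h subrr.
have n2 : (2%:R : C) != 0 by rewrite pnatr_eq0.
by rewrite -[x]scale1r -(mulVf n2) -scalerA h2 scaler0.
Qed.

Lemma cntD1 i j U : i \in U -> cnt j U = (cnt j (U :\ i) + (i < j))%N.
Proof.
move=> iU; rewrite -{1}(setD1K iU) cntU ?cnt1 1?addnC //.
by rewrite disjoints1 !inE eqxx.
Qed.

Lemma d2 (b : form) : dR (dR b) = form0 R n.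
Proof.
apply/ffunP => U; rewrite dRE ffunE.
under eq_bigr => i _ do rewrite dRE mderiv_sum scaler_sumr.
under eq_bigr => i _ do under eq_bigr => j _ do rewrite mderivZ scalerA.
apply: selfopp.
rewrite {1}(exchange_big_dep (fun j => j \in U)) /=; last first.
  by move=> i j _; rewrite in_setD1 => /andP[].
rewrite -sumrN; apply: eq_bigr => j jU; rewrite -sumrN.
apply: eq_big => [i|i]; first by rewrite !in_setD1 jU andbT andbC eq_sym.
move=> /andP[iU]; rewrite in_setD1 => /andP[ji _].
have -> : (U :\ j) :\ i = (U :\ i) :\ j by rewrite !setDDl setUC.
rewrite [X in _ = - (_ *: X)]mderiv_comm -scaleNr; congr (_ *: _).
have ij : i != j by rewrite eq_sym.
rewrite (@cntD1 i j U iU) (@cntD1 j i U jU) -!sgnD.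
apply: (@sgn_opp _ _ (cnt j (U :\ i) + cnt i (U :\ j))).
have : ((i < j) + (j < i) = 1)%N.
  by move: ij; rewrite -(inj_eq val_inj) /=; case: ltngtP.
set e1 := cnt i (U :\ j); set e2 := cnt j (U :\ i).
move: (i < j)%N (j < i)%N => x y; case: x; case: y => //= _; lia.
Qed.


Lemma dR_odd (a : form) S : even_form a -> ~~ odd #|S| -> dR a S = 0.
Proof.
move=> ea eS; rewrite dRE big1 // => i iS; rewrite ea ?mderiv0 ?scaler0 //.
by move: eS; rewrite (cardsD1 i S) iS add1n /= negbK.
Qed.

Lemma phi_even (a b : form) : even_form a -> even_form b -> even_form (phi a b).
Proof.
move=> ea eb U oU; rewrite /phi wedgeE big1 // => S SU.
have hU : odd #|U| = odd #|S| (+) odd #|U :\: S|.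
  by rewrite -(cardsID S U) (setIidPr SU) oddD.
case oS: (odd #|S|).
  by rewrite (dR_odd b (U :\: S) eb) ?mulr0 ?scaler0 //; move: hU; rewrite oU oS; case: (odd _).
by rewrite (dR_odd a S ea) ?oS // mul0r scaler0.
Qed.

Lemma phi_exact (a b : form) : even_form a -> even_form b -> exact_even (phi a b).
Proof.
move=> ea eb; split; first exact: phi_even.
by exists (wedge a (dR b)); rewrite leib ?d2.
Qed.

Lemma mulY_even i (a : form) : even_form a -> even_form (mulY i a).
Proof. by move=> ea U oU; rewrite ffunE ea ?mulr0. Qed.


Lemma sc4 (w : C) (x1 x2 x3 x4 : P) :
  w *: x1 + - (w *: x2) + (- (w *: x3) + w *: x4) = w *: (x1 + - x2 + (- x3 + x4)).
Proof. by rewrite !scalerDr !scalerN. Qed.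

Opaque mderiv dR wedge mulY.

Lemma prodE S T (a b : 'I_n -> C) (x y : 'I_n -> P) :
  (\sum_(i in S) a i *: x i) * (\sum_(j in T) b j *: y j)
  = \sum_(i in S) \sum_(j in T) (a i * b j) *: (x i * y j).
Proof.
rewrite mulr_suml; apply: eq_bigr => i _; rewrite mulr_sumr; apply: eq_bigr => j _.
by rewrite -scalerAl -scalerAr scalerA.
Qed.

Lemma combo p q i j (A B : P) :
  mderiv i ('X_p * ('X_q * A)) * mderiv j B - mderiv i ('X_p * A) * mderiv j ('X_q * B)
  - mderiv i ('X_q * A) * mderiv j ('X_p * B) + mderiv i A * mderiv j ('X_p * ('X_q * B))
  = - ((p == i)%:R * ((q == j)%:R * (A * B))) - (q == i)%:R * ((p == j)%:R * (A * B)).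
Proof. rewrite !mderivM !mX; ring. Qed.

Lemma dsum1 S p (G : 'I_n -> P) :
  \sum_(i in S) (p == i)%:R * G i = if p \in S then G p else 0.
Proof.
case: (boolP (p \in S)) => pS.
  rewrite (bigD1 p) //= eqxx mul1r big1 ?addr0 // => i /andP[_ ip].
  by rewrite eq_sym (negbTE ip) mul0r.
apply: big1 => i iS; have -> : (p == i) = false by apply: contraNF pS => /eqP ->.
by rewrite mul0r.
Qed.

Lemma dsum2 S T p q (k : 'I_n -> 'I_n -> C) (F : 'I_n -> 'I_n -> P) :
  \sum_(i in S) \sum_(j in T) k i j *: ((p == i)%:R * ((q == j)%:R * F i j))
  = if (p \in S) && (q \in T) then k p q *: F p q else 0.
Proof.
rewrite (eq_bigr (fun i => (p == i)%:R * \sum_(j in T) (q == j)%:R * (k i j *: F i j))).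
  rewrite dsum1; case: (p \in S) => //=; by rewrite dsum1.
move=> i _; rewrite mulr_sumr; apply: eq_bigr => j _; by rewrite !scalerAr.
Qed.

Definition Hf (w1 w2 : form) U p q S : P :=
  if (p \in S) && (q \in U :\: S) then
    (wsgn R S (U :\: S) * (sgn (cnt p S) * sgn (cnt q (U :\: S)))) *:
      (w1 (S :\ p) * w2 ((U :\: S) :\ q))
  else 0.

Lemma phiST (a b : form) S T : dR a S * dR b T =
  \sum_(i in S) \sum_(j in T) (sgn (cnt i S) * sgn (cnt j T)) *:
     (mderiv i (a (S :\ i)) * mderiv j (b (T :\ j))).
Proof. by rewrite (dRE a S) (dRE b T) prodE. Qed.

Lemma comb4 S T (k : 'I_n -> 'I_n -> C) (f1 f2 f3 f4 : 'I_n -> 'I_n -> P) :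
  \sum_(i in S) \sum_(j in T) k i j *: f1 i j - \sum_(i in S) \sum_(j in T) k i j *: f2 i j
  + (- \sum_(i in S) \sum_(j in T) k i j *: f3 i j + \sum_(i in S) \sum_(j in T) k i j *: f4 i j)
  = \sum_(i in S) \sum_(j in T) k i j *: (f1 i j - f2 i j - f3 i j + f4 i j).
Proof.
rewrite -!sumrN -!big_split; apply: eq_bigr => i _.
rewrite -!sumrN -!big_split; apply: eq_bigr => j _ /=.
by rewrite !scalerDr !scalerN addrA.
Qed.

Lemma comb2 S T (k : 'I_n -> 'I_n -> C) (g1 g2 : 'I_n -> 'I_n -> P) :
  \sum_(i in S) \sum_(j in T) k i j *: (- g1 i j - g2 i j)
  = - (\sum_(i in S) \sum_(j in T) k i j *: g1 i j) - \sum_(i in S) \sum_(j in T) k i j *: g2 i j.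
Proof.
rewrite -!sumrN -!big_split; apply: eq_bigr => i _.
rewrite -!sumrN -!big_split; apply: eq_bigr => j _ /=.
by rewrite scalerDr !scalerN.
Qed.

Lemma Ygen (a1 b1 a2 b2 a3 b3 a4 b4 : form) S T :
  dR a1 S * dR b1 T + - (dR a2 S * dR b2 T) + (- (dR a3 S * dR b3 T) + dR a4 S * dR b4 T)
  = \sum_(i in S) \sum_(j in T) (sgn (cnt i S) * sgn (cnt j T)) *:
     (mderiv i (a1 (S :\ i)) * mderiv j (b1 (T :\ j))
      - mderiv i (a2 (S :\ i)) * mderiv j (b2 (T :\ j))
      - mderiv i (a3 (S :\ i)) * mderiv j (b3 (T :\ j))
      + mderiv i (a4 (S :\ i)) * mderiv j (b4 (T :\ j))).
Proof.
rewrite -comb4.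
congr (_ + - _ + (- _ + _)); exact: phiST.
Qed.

Lemma Ystep (w1 w2 : form) p q S T :
  dR (mulY p (mulY q w1)) S * dR w2 T + - (dR (mulY p w1) S * dR (mulY q w2) T)
  + (- (dR (mulY q w1) S * dR (mulY p w2) T) + dR w1 S * dR (mulY p (mulY q w2)) T)
  = - (if (p \in S) && (q \in T) then (sgn (cnt p S) * sgn (cnt q T)) *: (w1 (S :\ p) * w2 (T :\ q)) else 0)
    - (if (q \in S) && (p \in T) then (sgn (cnt q S) * sgn (cnt p T)) *: (w1 (S :\ q) * w2 (T :\ p)) else 0).
Proof.
rewrite Ygen.
under eq_bigr => i _ do under eq_bigr => j _ do rewrite !ffunE combo.
by rewrite comb2 !dsum2.
Qed.

Lemma form_addE (a b : form) U : form_add a b U = a U + b U.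
Proof. by rewrite ffunE. Qed.
Lemma form_oppE (a : form) U : form_opp a U = - a U.
Proof. by rewrite ffunE. Qed.
Lemma form_scaleE c (a : form) U : form_scale c a U = c *: a U.
Proof. by rewrite ffunE. Qed.

Lemma top4 U (g1 g2 g3 g4 : {set 'I_n} -> P) :
  \sum_(S : {set 'I_n} | S \subset U) g1 S + - \sum_(S : {set 'I_n} | S \subset U) g2 S
  + (- \sum_(S : {set 'I_n} | S \subset U) g3 S + \sum_(S : {set 'I_n} | S \subset U) g4 S)
  = \sum_(S : {set 'I_n} | S \subset U) (g1 S + - g2 S + (- g3 S + g4 S)).
Proof. by rewrite -!sumrN -!big_split. Qed.


Lemma Etop (w1 w2 : form) p q U :
  form_add
    (form_add (phi (mulY p (mulY q w1)) w2)
              (form_opp (phi (mulY p w1) (mulY q w2))))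
    (form_add (form_opp (phi (mulY q w1) (mulY p w2)))
              (phi w1 (mulY p (mulY q w2)))) U
  = - (\sum_(S : {set 'I_n} | S \subset U) Hf w1 w2 U p q S + \sum_(S : {set 'I_n} | S \subset U) Hf w1 w2 U q p S).
Proof.
rewrite {1}form_addE {1}form_addE {1}form_addE {1}form_oppE {1}form_oppE /phi.
rewrite {1}(wedgeE (dR (mulY p (mulY q w1))) (dR w2) U) {1}(wedgeE (dR (mulY p w1)) (dR (mulY q w2)) U).
rewrite {1}(wedgeE (dR (mulY q w1)) (dR (mulY p w2)) U) {1}(wedgeE (dR w1) (dR (mulY p (mulY q w2))) U).
apply: etrans (top4 _ _ _ _ _) _.
rewrite -big_split -sumrN; apply: eq_bigr => S SU /=.
apply: etrans (sc4 _ _ _ _ _) _.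
rewrite {1}(Ystep w1 w2 p q S (U :\: S)).
rewrite scalerBr scalerN opprD /Hf.
by congr (- _ + - _); case: ifP => _; rewrite ?scalerA ?scaler0.
Qed.


Lemma reidx U p q (G : {set 'I_n} -> P) : p \in U -> q \in U -> p != q ->
  \sum_(S : {set 'I_n} | S \subset U) (if (p \in S) && (q \in U :\: S) then G S else 0)
  = \sum_(V : {set 'I_n} | V \subset U :\: [set p; q]) G (p |: V).
Proof.
move=> pU qU pq; rewrite -big_mkcondr.
rewrite (reindex_onto (fun V => p |: V) (fun S => S :\ p)) /=; last first.
  by move=> S /andP[_ /andP[pS _]]; rewrite setD1K.
apply: eq_bigl => V; rewrite setU1D1 subUset sub1set pU setU11 /=.
apply/idP/subsetP.
  move=> /andP[/andP[VU qV] pV] x xV; rewrite !inE (subsetP VU x xV) andbT.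
  move: qV; rewrite !inE => /andP[/norP[_ qV'] _].
  case: (x =P p) => [xp|]; first by rewrite -xp xV in pV.
  by case: (x =P q) => [xq|] //; rewrite -xq xV in qV'.
move=> H.
have VU : V \subset U by apply/subsetP => x /H; rewrite !inE => /andP[_ ->].
have pV : p \notin V by apply/negP => /H; rewrite !inE eqxx.
have qV : q \notin V by apply/negP => /H; rewrite !inE eqxx orbT.
by rewrite VU pV !inE (negbTE qV) qU eq_sym (negbTE pq).
Qed.

Lemma cancel_pq (w1 w2 : form) U p q V : p \in U -> q \in U -> p != q ->
  V \subset U :\: [set p; q] -> Hf w1 w2 U p q (p |: V) + Hf w1 w2 U q p (q |: V) = 0.
Proof.
move=> pU qU pq HV.
have pV : p \notin V by apply/negP => /(subsetP HV); rewrite !inE eqxx.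
have qV : q \notin V by apply/negP => /(subsetP HV); rewrite !inE eqxx orbT.
set Cs := U :\: [set p; q] :\: V.
have pC : p \notin Cs by rewrite /Cs !inE eqxx /= andbF.
have qC : q \notin Cs by rewrite /Cs !inE eqxx orbT /= andbF.
have E1 : U :\: (p |: V) = q |: Cs.
  apply/setP => x; rewrite !inE; case: (x =P q) => [->|_].
    by rewrite eq_sym (negbTE pq) (negbTE qV) qU.
  by case: (x =P p) => //= _; case: (x \in V).
have E2 : U :\: (q |: V) = p |: Cs.
  apply/setP => x; rewrite !inE; case: (x =P p) => [->|_].
    by rewrite (negbTE pq) (negbTE pV) pU.
  by case: (x =P q) => //= _; case: (x \in V); rewrite ?andbF.
rewrite /Hf E1 E2 !setU11 /= !setU1K //.
have -> : (wsgn R (p |: V) (q |: Cs) * (sgn (cnt p (p |: V)) * sgn (cnt q (q |: Cs))))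
  = - (wsgn R (q |: V) (p |: Cs) * (sgn (cnt q (q |: V)) * sgn (cnt p (p |: Cs)))).
  have dpV : [disjoint [set p] & V] by rewrite disjoints1.
  have dqV : [disjoint [set q] & V] by rewrite disjoints1.
  have dpC : [disjoint [set p] & Cs] by rewrite disjoints1.
  have dqC : [disjoint [set q] & Cs] by rewrite disjoints1.
  rewrite !wsgnE !NUl // !NUr // !NN1l !NN1r !cntU // !cnt_self !cnt1 -!sgnD.
  apply: (@sgn_opp _ _ (#|V| + cnt p Cs + cnt q Cs + NN V Cs)).
  have h1 := @cnt_cntg p V pV; have h2 := @cnt_cntg q V qV.
  have h3 : ((p < q) + (q < p) = 1)%N.
    by move: pq; rewrite -(inj_eq val_inj) /=; case: ltngtP.
  set a1 := cnt p V in h1 *; set a2 := cntg p V in h1 *.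
  set b1 := cnt q V in h2 *; set b2 := cntg q V in h2 *.
  set c1 := cnt p Cs; set c2 := cnt q Cs; set d := NN V Cs; set v := #|V| in h1 h2 *.
  move: (p < q)%N (q < p)%N h3 => x y; case: x; case: y => //= _; lia.
by rewrite scaleNr addNr.
Qed.

Lemma reidxH (w1 w2 : form) U p q : p \in U -> q \in U -> p != q ->
  \sum_(S : {set 'I_n} | S \subset U) Hf w1 w2 U p q S
  = \sum_(V : {set 'I_n} | V \subset U :\: [set p; q]) Hf w1 w2 U p q (p |: V).
Proof.
move=> pU qU pq; rewrite {1}/Hf (reidx _ _ _ _ pU qU pq).
apply: eq_bigr => V HV.
have qV : q \notin V by apply/negP => /(subsetP HV); rewrite !inE eqxx orbT.
have qp : (q == p) = false by apply/negbTE; rewrite eq_sym.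
by rewrite /Hf setU11 in_setD !inE qp (negbTE qV) qU.
Qed.

Lemma sumH0 (w1 w2 : form) U p q :
  \sum_(S : {set 'I_n} | S \subset U) Hf w1 w2 U p q S
  + \sum_(S : {set 'I_n} | S \subset U) Hf w1 w2 U q p S = 0.
Proof.
case: (boolP [&& p \in U, q \in U & p != q]) => [/and3P[pU qU pq] | hn].
  have qp : q != p by rewrite eq_sym.
  rewrite (reidxH _ _ _ _ _ pU qU pq) (reidxH _ _ _ _ _ qU pU qp).
  have -> : [set q; p] = [set p; q] by rewrite setUC.
  rewrite -big_split /=; apply: big1 => V HV.
  exact: cancel_pq.
have H1 : forall a b S, S \subset U -> ~~ [&& a \in U, b \in U & a != b] ->
    Hf w1 w2 U a b S = 0.
  move=> a b S SU hab; rewrite /Hf; case: ifP => // /andP[aS].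
  rewrite in_setD => /andP[bS bU]; exfalso; apply: (negP hab).
  by rewrite (subsetP SU _ aS) bU /=; apply: contraNneq bS => <-.
rewrite !big1 ?addr0 // => S SU; apply: H1 => //.
by apply: contra hn => /and3P[-> -> ?]; rewrite eq_sym.
Qed.

Lemma part1 (w1 w2 : form) p q :
  form_add
    (form_add (phi (mulY p (mulY q w1)) w2)
              (form_opp (phi (mulY p w1) (mulY q w2))))
    (form_add (form_opp (phi (mulY q w1) (mulY p w2)))
              (phi w1 (mulY p (mulY q w2))))
  = form0 R n.
Proof. by apply/ffunP => U; rewrite Etop sumH0 oppr0 ffunE. Qed.

End Aux.


Section Alg.
Variables (K : fieldType) (A : algType K).

Lemma commD (x y z : A) : comm (x + y) z = comm x z + comm y z.
Proof. by rewrite /comm mulrDl mulrDr opprD addrACA. Qed.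

Lemma commN (x z : A) : comm (- x) z = - comm x z.
Proof. by rewrite /comm mulNr mulrN opprB opprK addrC. Qed.

Lemma iterbD (T : Type) (xi : T -> A) ws (x y : A) :
  iterb xi (x + y) ws = iterb xi x ws + iterb xi y ws.
Proof. by elim: ws x y => [|w ws IH] x y //=; rewrite commD IH. Qed.

Lemma iterbN (T : Type) (xi : T -> A) ws (x : A) :
  iterb xi (- x) ws = - iterb xi x ws.
Proof. by elim: ws x => [|w ws IH] x //=; rewrite commN IH. Qed.

Lemma iterb4 (T : Type) (xi : T -> A) ws (x1 x2 x3 x4 : A) :
  iterb xi x1 ws - iterb xi x2 ws - iterb xi x3 ws + iterb xi x4 ws
  = iterb xi (x1 - x2 - x3 + x4) ws.
Proof. by rewrite !iterbD !iterbN. Qed.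

Lemma LD k (x y : A) : L k.+2 x -> L k.+2 y -> L k.+2 (x + y).
Proof. by move=> hx hy; apply: span_add. Qed.

Lemma LN k (x : A) : L k.+2 x -> L k.+2 (- x).
Proof. by move=> hx; rewrite -scaleN1r; apply: span_scale. Qed.

Lemma commL k (x y : A) : L k.+1 x -> L k.+2 (comm x y).
Proof.
move=> hx; have -> : comm x y = (-1) *: comm y x.
  by rewrite scaleN1r /comm opprB.
by apply: span_scale; apply: span_gen; exists y, x.
Qed.

Lemma iterbL (T : Type) (xi : T -> A) ws k (x : A) :
  L k.+1 x -> L (size ws + k.+1) (iterb xi x ws).
Proof.
elim: ws k x => [|w ws IH] k x hx; first by rewrite add0n.
have := IH k.+1 (comm x (xi w)) (@commL k x (xi w) hx).
by rewrite addSnnS.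
Qed.
Lemma comb_final (x1 x2 x3 x4 r1 r2 r3 r4 e1 e2 e3 e4 : A) :
  L 3 r1 -> L 3 r2 -> L 3 r3 -> L 3 r4 ->
  x1 = r1 + e1 -> x2 = r2 + e2 -> x3 = r3 + e3 -> x4 = r4 + e4 ->
  e1 + - e2 + (- e3 + e4) = 0 -> L 3 (x1 - x2 - x3 + x4).
Proof.
move=> h1 h2 h3 h4 -> -> -> -> h.
rewrite !opprD (addrACA r1) (addrACA (r1 + - r2)) (addrACA (r1 + - r2 + - r3)).
rewrite -(addrA (e1 - e2)) h addr0.
by apply: LD; [apply: LD; [apply: LD; [| apply: LN] | apply: LN] |].
Qed.
End Alg.


Theorem lemma3p1 (R : realType) (n : nat) (p q : 'I_n) (w1 w2 : dform R n) :
  even_form w1 -> even_form w2 ->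
  (* part 1: phi((x_p1 - x_p2)(x_q1 - x_q2) w1 (x) w2) = 0 *)
  form_add
    (form_add (phi (mulY p (mulY q w1)) w2)
              (form_opp (phi (mulY p w1) (mulY q w2))))
    (form_add (form_opp (phi (mulY q w1) (mulY p w2)))
              (phi w1 (mulY p (mulY q w2))))
  = form0 R n
  /\
  (* part 2: for every m = size ws + 2 >= 2, psi kills
     (x_p1 - x_p2)(x_q1 - x_q2) (w1 (x) w2 (x) w3 (x) ... (x) wm) *)
  (forall (A : algType R[i]) (xi eta : dform R n -> A),
     (forall a b, even_form a -> even_form b -> xi (form_add a b) = xi a + xi b) ->
     (forall c a, even_form a -> xi (form_scale c a) = c *: xi a) ->
     (forall a b, exact_even a -> exact_even b ->
        eta (form_add a b) = eta a + eta b) ->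
     (forall c a, exact_even a -> eta (form_scale c a) = c *: eta a) ->
     (forall a, exact_even a -> L 2 (eta a)) ->
     (forall a b, even_form a -> even_form b ->
        L 3 (comm (xi a) (xi b) - eta (phi a b))) ->
     forall ws : seq (dform R n), (forall w, w \in ws -> even_form w) ->
     L (size ws + 3)
       (iterb xi (comm (xi (mulY p (mulY q w1))) (xi w2)) ws
        - iterb xi (comm (xi (mulY p w1)) (xi (mulY q w2))) ws
        - iterb xi (comm (xi (mulY q w1)) (xi (mulY p w2))) ws
        + iterb xi (comm (xi w1) (xi (mulY p (mulY q w2)))) ws)).
Proof.
move=> e1 e2; split; first exact: (@part1 R n w1 w2 p q).
move=> A xi eta xiD xiZ etaD etaZ _ hL3 ws _.
have ea1 := @mulY_even R n p _ (@mulY_even R n q _ e1).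
have eb4 := @mulY_even R n p _ (@mulY_even R n q _ e2).
have ea2 := @mulY_even R n p _ e1.
have eb2 := @mulY_even R n q _ e2.
have ea3 := @mulY_even R n q _ e1.
have eb3 := @mulY_even R n p _ e2.
have ex_add : forall f g : dform R n, exact_even f -> exact_even g -> exact_even (form_add f g).
  move=> f g [ef [f' Ef]] [eg [g' Eg]]; split.
    by move=> U oU; rewrite form_addE ef ?eg ?addr0.
  by exists (form_add f' g'); rewrite dR_add Ef Eg.
have ex_opp : forall f : dform R n, exact_even f -> exact_even (form_opp f).
  move=> f [ef [f' Ef]]; split.
    by move=> U oU; rewrite form_oppE ef ?oppr0.
  by exists (form_opp f'); rewrite dR_opp Ef.
have eta_opp : forall f, exact_even f -> eta (form_opp f) = - eta f.
  move=> f ef; have -> : form_opp f = form_scale (-1) f.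
    by apply/ffunP => U; rewrite form_oppE form_scaleE scaleN1r.
  by rewrite etaZ // scaleN1r.
have eta0 : eta (form0 R n) = 0.
  have ex0 : exact_even (form0 R n).
    by split; [move=> U _; rewrite ffunE | exists (form0 R n); rewrite dR0].
  have -> : form0 R n = form_scale 0 (form0 R n).
    by apply/ffunP => U; rewrite form_scaleE ffunE scale0r.
  by rewrite etaZ // scale0r.
have eP1 := @phi_exact R n _ _ ea1 e2.
have eP2 := @phi_exact R n _ _ ea2 eb2.
have eP3 := @phi_exact R n _ _ ea3 eb3.
have eP4 := @phi_exact R n _ _ e1 eb4.
have key : forall P1 P2 P3 P4 : dform R n, exact_even P1 -> exact_even P2 ->
    exact_even P3 -> exact_even P4 ->
    form_add (form_add P1 (form_opp P2)) (form_add (form_opp P3) P4) = form0 R n ->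
    eta P1 + - eta P2 + (- eta P3 + eta P4) = 0.
  move=> P1 P2 P3 P4 x1 x2 x3 x4 H; have := congr1 eta H.
  rewrite eta0 (etaD _ _ (ex_add _ _ x1 (ex_opp _ x2)) (ex_add _ _ (ex_opp _ x3) x4)).
  by rewrite (etaD _ _ x1 (ex_opp _ x2)) (etaD _ _ (ex_opp _ x3) x4) (eta_opp _ x2) (eta_opp _ x3).
have h := key _ _ _ _ eP1 eP2 eP3 eP4 (@part1 R n w1 w2 p q).
rewrite (@iterb4 _ _ _ xi ws).
apply: (@iterbL _ _ _ xi ws 2).
have [r1 hr1 E1] : exists2 r, L 3 r & comm (xi (mulY p (mulY q w1))) (xi w2) = r + eta (phi (mulY p (mulY q w1)) w2).
  by exists (comm (xi (mulY p (mulY q w1))) (xi w2) - eta (phi (mulY p (mulY q w1)) w2)); [exact: hL3 | rewrite subrK].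
have [r2 hr2 E2] : exists2 r, L 3 r & comm (xi (mulY p w1)) (xi (mulY q w2)) = r + eta (phi (mulY p w1) (mulY q w2)).
  by exists (comm (xi (mulY p w1)) (xi (mulY q w2)) - eta (phi (mulY p w1) (mulY q w2))); [exact: hL3 | rewrite subrK].
have [r3 hr3 E3] : exists2 r, L 3 r & comm (xi (mulY q w1)) (xi (mulY p w2)) = r + eta (phi (mulY q w1) (mulY p w2)).
  by exists (comm (xi (mulY q w1)) (xi (mulY p w2)) - eta (phi (mulY q w1) (mulY p w2))); [exact: hL3 | rewrite subrK].
have [r4 hr4 E4] : exists2 r, L 3 r & comm (xi w1) (xi (mulY p (mulY q w2))) = r + eta (phi w1 (mulY p (mulY q w2))).
  by exists (comm (xi w1) (xi (mulY p (mulY q w2))) - eta (phi w1 (mulY p (mulY q w2)))); [exact: hL3 | rewrite subrK].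
exact: (@comb_final _ _ _ _ _ _ _ _ _ _ _ _ _ _ hr1 hr2 hr3 hr4 E1 E2 E3 E4 h).
Qed.
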